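(* Let $\Gamma=(Q,A,E,(\delta_e)_{e\in E})$ be an MEMDP, $q\in Q$ a state, $W$ a parity objective, and $b\in\mathcal D(E)$ a prior belief with $\mathrm{Supp}(b)=E$. Then $\mathrm{val}^{\mathrm{uni}}_q(\Gamma,W)=1$ if and only if $\mathrm{val}^{\mathrm{pr}}_q(\Gamma,b,W)=1$. Moreover, for every strategy $\sigma\in\mathrm{Strat}(Q,A)$: $\mathrm{val}^{\mathrm{uni}}_q(\Gamma,\sigma,W)=1$ if and only if $\mathrm{val}^{\mathrm{pr}}_q(\Gamma,b,\sigma,W)=1$.
   Context: For a set $X$, a distribution on $X$ is a function $d:X\to[0,1]$ with countable support $\mathrm{Supp}(d)=\{x: d(x)>0\}$ and $\sum_x d(x)=1$; $\mathcal D(X)$ denotes the set of distributions. An MDP is $G=(Q,A,\delta)$ with $Q,A$ finite non-empty and $\delta:Q\times A\to\mathcal D(Q)$. Finite runs are elements of $Q\cdot(A\cdot Q)^*$, infinite runs elements of $(Q\cdot A)^\omega$. A strategy is a map $\sigma:Q\cdot(A\cdot Q)^*\to\mathcal D(A)$; $\mathrm{Strat}(Q,A)$ is the set of strategies. For $q\in Q$, $\mathbb P^\sigma_q[G,\cdot]$ is the unique probability measure on the Borel sets of infinite runs such that the cylinder of a finite run $q_0(a_1,q_1)\cdots(a_n,q_n)$ has probability $[q_0=q]\prod_{i=1}^n\sigma(q_0(a_1,q_1)\cdots(a_{i-1},q_{i-1}))(a_i)\,\delta(q_{i-1},a_i)(q_i)$; sets of infinite state sequences are measured via projection of runs onto their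 state sequences. A parity objective is given by a labelling $f:Q\to\mathbb N$: $W$ is the set of infinite state sequences whose maximal label occurring infinitely often is even. An MEMDP is $\Gamma=(Q,A,E,(\delta_e)_{e\in E})$ with $E$ a finite non-empty set of environments and each $\Gamma[e]:=(Q,A,\delta_e)$ an MDP. Values: $\mathrm{val}^{\mathrm{uni}}_q(\Gamma,\sigma,W)=\min_{e\in E}\mathbb P^\sigma_q[\Gamma[e],W]$, $\mathrm{val}^{\mathrm{uni}}_q(\Gamma,W)=\sup_\sigma \mathrm{val}^{\mathrm{uni}}_q(\Gamma,\sigma,W)$; for $b\in\mathcal D(E)$, $\mathrm{val}^{\mathrm{pr}}_q(\Gamma,b,\sigma,W)=\sum_{e\in E}b(e)\,\mathbb P^\sigma_q[\Gamma[e],W]$ and $\mathrm{val}^{\mathrm{pr}}_q(\Gamma,b,W)=\sup_\sigma\mathrm{val}^{\mathrm{pr}}_q(\Gamma,b,\sigma,W)$. *)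

(* Defs.v *)
From HB Require Import structures.
From mathcomp Require Import all_boot all_order all_algebra.
From mathcomp Require Import all_classical all_reals.
From mathcomp Require Import ereal measure probability.
Set Implicit Arguments. Unset Strict Implicit. Unset Printing Implicit Defensive.
Import Order.TTheory GRing.Theory Num.Theory.
Local Open Scope classical_set_scope.
Local Open Scope ring_scope.

Section Defs.
Variable R : realType.

(* distributions on a finite set (countable support is automatic) *)
Definition is_dist (T : finType) (d : T -> R) : Prop :=
  (forall x, 0 <= d x) /\ \sum_(x : T) d x = 1.

Variables (Q A : finType).

(* finite runs  q0 (a1,q1) ... (an,qn)  represented as (q0, [:: (a1,q1); ...]) *)
Definition finrun := (Q * seq (A * Q))%type.

Definition is_transition (delta : Q -> A -> Q -> R) : Prop :=
  forall q a, is_dist (delta q a).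

Definition is_strategy (sigma : finrun -> A -> R) : Prop :=
  forall h, is_dist (sigma h).

(* infinite runs (Q.A)^omega : r i = (q_i, a_{i+1}) *)
Definition runs (q0 : Q) (a0 : A) := nat -> Q * A.
HB.instance Definition _ q0 a0 := Choice.on (runs q0 a0).
HB.instance Definition _ q0 a0 := isPointed.Build (runs q0 a0) (fun=> (q0, a0)).

Definition cylinder q0 a0 (h : finrun) : set (runs q0 a0) :=
  [set r | (r 0%N).1 = h.1 /\
           [seq ((r i).2, (r i.+1).1) | i <- iota 0 (size h.2)] = h.2].

Definition cylinders q0 a0 : set (set (runs q0 a0)) := range (@cylinder q0 a0).

Definition Runs q0 a0 := g_sigma_algebraType (@cylinders q0 a0).

Fixpoint path_prob (delta : Q -> A -> Q -> R) (sigma : finrun -> A -> R)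
    (q0 : Q) (past : seq (A * Q)) (cur : Q) (rest : seq (A * Q)) : R :=
  match rest with
  | [::] => 1
  | (a, q') :: rest' =>
      sigma (q0, past) a * delta cur a q' *
      path_prob delta sigma q0 (rcons past (a, q')) q' rest'
  end.

Definition cylinder_prob (delta : Q -> A -> Q -> R) (sigma : finrun -> A -> R)
    (q : Q) (h : finrun) : R :=
  (h.1 == q)%:R * path_prob delta sigma h.1 [::] h.1 h.2.

Definition is_run_measure qp a0 (delta : Q -> A -> Q -> R)
    (sigma : finrun -> A -> R) (q : Q) (P : probability (Runs qp a0) R) : Prop :=
  forall h : finrun, P (cylinder h) = (cylinder_prob delta sigma q h)%:E.

Definition inf_often (P : nat -> Prop) : Prop :=
  forall N, exists i, (N <= i)%N /\ P i.

Definition parity (f : Q -> nat) : set (nat -> Q) :=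
  [set s | exists n, ~~ odd n /\ inf_often (fun i => f (s i) = n) /\
           forall m, inf_often (fun i => f (s i) = m) -> (m <= n)%N].

Definition on_states qp a0 (W : set (nat -> Q)) : set (Runs qp a0) :=
  [set r | W (fun i => (r i).1)].

End Defs.

(* Main.v *)
Require Import Defs.
From HB Require Import structures.
From mathcomp Require Import all_boot all_order all_algebra.
From mathcomp Require Import all_classical all_reals.
From mathcomp Require Import ereal measure probability.
From mathcomp Require Import lra.
Set Implicit Arguments. Unset Strict Implicit. Unset Printing Implicit Defensive.
Import Order.TTheory GRing.Theory Num.Theory.
Local Open Scope classical_set_scope.
Local Open Scope ring_scope.

Section M.
Variables (Q A : finType) (q0 : Q) (a0 : A).
Local Notation T := (Runs q0 a0).

Lemma cyl_meas (h : finrun Q A) : measurable (cylinder h : set T).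
Proof. apply: sub_sigma_algebra; by exists h. Qed.

Lemma prop_meas (P : Prop) : measurable ([set _ : T | P]).
Proof. 
case: (pselect P) => p.
  have -> : [set _ : T | P] = setT by apply/seteqP; split.
  exact: measurableT.
have -> : [set _ : T | P] = set0 by apply/seteqP; split.
exact: measurable0.
Qed.

Definition stateat (h : finrun Q A) i := nth h.1 (h.1 :: map snd h.2) i.
Definition prefix (r : T) i : finrun Q A :=
  ((r 0%N).1, [seq ((r j).2, (r j.+1).1) | j <- iota 0 i]).

Lemma prefix_state (r : T) i : stateat (prefix r i) i = (r i).1.
Proof.
rewrite /stateat /prefix /=.
have -> : (r 0%N).1 :: [seq i0.2 | i0 <- [seq ((r j).2, (r j.+1).1) | j <- iota 0 i]]
   = [seq (r j).1 | j <- iota 0 i.+1].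
  have e : iota 1 i = map (addn 1) (iota 0 i) by rewrite -iotaDl.
  rewrite /= -map_comp e -map_comp.
  by congr (_ :: _); apply: eq_map => j /=; rewrite add1n.
by rewrite (nth_map 0%N) ?size_iota // nth_iota.
Qed.

Lemma state_meas (P : Q -> Prop) i : measurable [set r : T | P (r i).1].
Proof. 
pose F k := match @unpickle (finrun Q A) k with
  | Some h => [set r : T | (size h.2 = i /\ P (stateat h i))] `&` cylinder h
  | None => set0 end.
have -> : [set r : T | P (r i).1] = \bigcup_k F k.
  apply/seteqP; split => r.
    move=> Pr; exists (pickle (prefix r i)) => //.
    rewrite /F pickleK; split.
      by split; [rewrite /= size_map size_iota | rewrite prefix_state].
    by rewrite /cylinder /prefix /= size_map size_iota.
  move=> [k _]; rewrite /F; case: (unpickle k) => [h|//].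
  move=> [[sz Ph] [e1 e2]]; move: Ph.
  idtac.
  have -> : h = prefix r i by rewrite [h]surjective_pairing -e1 -e2 sz.
  by rewrite prefix_state.
apply: bigcupT_measurable => k; rewrite /F; case: (unpickle k) => [h|]; last exact: measurable0.
apply: measurableI; [exact: prop_meas | exact: cyl_meas].
Qed.

Lemma io_meas (g : nat -> Q -> Prop) :
  measurable [set r : T | inf_often (fun i => g i (r i).1)].
Proof.
have -> : [set r : T | inf_often (fun i => g i (r i).1)] =
  \bigcap_N \bigcup_i ([set _ : T | (N <= i)%N] `&` [set r : T | g i (r i).1]).
  apply/seteqP; split => r.
    by move=> H N _; have [i [Ni gi]] := H N; exists i.
  by move=> H N; have [i _ [Ni gi]] := H N I; exists i.
apply: bigcapT_measurable => N; apply: bigcupT_measurable => i.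
apply: measurableI; [exact: prop_meas | exact: state_meas].
Qed.

Lemma W_meas (f : Q -> nat) : measurable (@on_states Q A q0 a0 (parity f)).
Proof.
pose IO n := [set r : T | inf_often (fun i => f (r i).1 = n)].
have -> : @on_states Q A q0 a0 (parity f) =
  \bigcup_n ([set _ : T | ~~ odd n] `&` IO n `&`
     \bigcap_m (~` IO m `|` [set _ : T | (m <= n)%N])).
  apply/seteqP; split => r.
    move=> [n [on [io H]]]; exists n => //; split; first by split.
    move=> m _; case: (pselect (IO m r)) => im; [right; exact: H | by left].
  move=> [n _ [[on io] H]]; exists n; split => //; split => // m im.
  by case: (H m I).
apply: bigcupT_measurable => n; apply: measurableI.
  apply: measurableI; [exact: prop_meas | exact: (io_meas (fun _ x => f x = n))].
apply: bigcapT_measurable => m; apply: measurableU; last exact: prop_meas.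
apply: measurableC; exact: (io_meas (fun _ x => f x = m)).
Qed.
End M.
Section K.
Variables (R : realType) (E : finType) (b r : E -> R).
Hypotheses (bpos : forall e, 0 < b e) (bsum : \sum_e b e = 1)
  (r01 : forall e, 0 <= r e <= 1).

Lemma key_a e : b e * (1 - r e) <= 1 - \sum_e b e * r e.
Proof.
have -> : 1 - \sum_e b e * r e = \sum_e b e * (1 - r e).
  rewrite -{1}bsum -sumrB; apply: eq_bigr => i _; lra.
rewrite (bigD1 e) //= lerDl; apply: sumr_ge0 => i _.
have := r01 i; have := bpos i; nra.
Qed.

Lemma key_b : \sum_e b e * r e <= 1.
Proof.
have := key_a; case: (pickP (@predT E)) => [e0 _ H|H].
  have := H e0; have := r01 e0; have := bpos e0; nra.
by move: bsum; rewrite big_pred0 // => /esym/eqP; rewrite oner_eq0.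
Qed.

Lemma key_c (x : \bar R) : (forall e, (x <= (r e)%:E)%E) -> (x <= (\sum_e b e * r e)%:E)%E.
Proof.
move=> H; case: x H => [x| |] H; last by rewrite leNye.
  rewrite lee_fin; have -> : x = \sum_e b e * x by rewrite -mulr_suml bsum mul1r.
  apply: ler_sum => i _; rewrite ler_pM2l //; have := H i; by rewrite lee_fin.
case: (pickP (@predT E)) => [e0 _|H0]; first by have := H e0.
by move: bsum; rewrite big_pred0 // => /esym/eqP; rewrite oner_eq0.
Qed.
End K.

Local Open Scope ereal_scope.

Theorem mainTheorem1 (R : realType) (Q A E : finType) (a0 : A)
    (delta : E -> Q -> A -> Q -> R)
    (hdelta : forall e, is_transition (delta e))
    (q : Q) (f : Q -> nat) (b : E -> R)
    (hb : is_dist b) (hsupp : forall e, (0 < b e)%R)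
    (P : E -> (finrun Q A -> A -> R) -> Q -> probability (Runs q a0) R)
    (hP : forall e sigma q', is_strategy sigma ->
            is_run_measure (delta e) sigma q' (P e sigma q')) :
  let W := @on_states Q A q a0 (parity f) in
  let val_uni sigma := \big[mine/+oo]_(e : E) P e sigma q W in
  let val_pr sigma := \sum_(e : E) (b e)%:E * P e sigma q W in
  (ereal_sup [set val_uni sigma | sigma in @is_strategy R Q A] = 1
     <-> ereal_sup [set val_pr sigma | sigma in @is_strategy R Q A] = 1)
  /\ (forall sigma, is_strategy sigma -> (val_uni sigma = 1 <-> val_pr sigma = 1)).
Proof.
move=> W val_uni val_pr.
have Wm : measurable W := @W_meas Q A q a0 f.
have [b0 bsum] := hb.
pose r sigma e := fine (P e sigma q W).
have pE sigma e : P e sigma q W = (r sigma e)%:E.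
  rewrite /r fineK // ge0_fin_numE //.
  by apply: (le_lt_trans (probability_le1 (P e sigma q) Wm)); rewrite ltey.
have p01 sigma e : (0 <= r sigma e <= 1)%R.
  have h0 := measure_ge0 (P e sigma q) W.
  have h1 := probability_le1 (P e sigma q) Wm.
  by rewrite -!lee_fin -pE h0 h1.
have prE sigma : val_pr sigma = (\sum_e b e * r sigma e)%:E.
  rewrite /val_pr -sumEFin; apply: eq_bigr => e _; by rewrite pE EFinM.
have uniP sigma x : x <= val_uni sigma <-> forall e, x <= (r sigma e)%:E.
  split.
    by move/bigmin_geP => [_ H] e; rewrite -pE; apply: H.
  move=> H; apply/bigmin_geP; split; first exact: leey.
  by move=> e _; rewrite pE.
have [e0 _] : exists e : E, true.
  case: (pickP (@predT E)) => [e0 _|H]; first by exists e0.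
  by move: bsum; rewrite big_pred0 // => /esym/eqP; rewrite oner_eq0.
have K1 sigma : val_uni sigma <= val_pr sigma.
  rewrite prE; apply: key_c => //; exact/uniP.
have K2 sigma : val_pr sigma <= 1.
  by rewrite prE lee_fin; apply: key_b.
have K4 sigma : val_uni sigma <= 1.
  apply: (@le_trans _ _ (P e0 sigma q W)); first exact: bigmin_le.
  rewrite pE lee_fin; by case/andP: (p01 sigma e0).
have part2 sigma : val_uni sigma = 1 <-> val_pr sigma = 1.
  split => H.
    by apply/le_anti; rewrite K2 /= -H K1.
  apply/le_anti; rewrite K4 /=; apply/uniP => e.
  have := key_a hsupp bsum (p01 sigma) e.
  move: H; rewrite prE => /eqP; rewrite eqe => /eqP ->.
  rewrite subrr lee_fin => h; have := hsupp e; nra.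
split => //.
have supuni1 : ereal_sup [set val_uni sigma | sigma in @is_strategy R Q A] <= 1.
  by apply: ge_ereal_sup => y [sigma _ <-].
have suppr1 : ereal_sup [set val_pr sigma | sigma in @is_strategy R Q A] <= 1.
  by apply: ge_ereal_sup => y [sigma _ <-].
split => H.
  apply/le_anti; rewrite suppr1 /= -H; apply: ge_ereal_sup => y [sigma Hs <-].
  apply: (le_trans (K1 sigma)); apply: ereal_sup_ubound; by exists sigma.
apply/le_anti; rewrite supuni1 /=.
pose bmin := (\big[Order.min/1%R]_e b e)%R.
have bmin0 : (0 < bmin)%R by apply/bigmin_gtP; split.
have bminle e : (bmin <= b e)%R by apply: bigmin_le.
apply/lee_addgt0Pr => d d0.
rewrite -leeBlDr // -EFinB.
have : ((1 - d * bmin)%:E < ereal_sup [set val_pr sigma | sigma in @is_strategy R Q A]).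
  by rewrite H lte_fin; have := mulr_gt0 d0 bmin0; lra.
move=> /ereal_sup_gt [y [sigma Hs <-]]; rewrite prE lte_fin => hs.
apply: le_ereal_sup_tmp; exists (val_uni sigma); first by exists sigma.
apply/uniP => e; rewrite lee_fin.
have := key_a hsupp bsum (p01 sigma) e; have := bminle e; have := hsupp e.
have := mulr_gt0 d0 bmin0; move: hs; nra.
Qed.
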